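(* For every $n\ge1$, the itinerary map $\iota$ is a well-defined map $\mathcal{T}_n\to\mathcal{U}_n$, and it is injective.
   Context: $\Gamma=\{0,1,2,3\}$. A word $w$ is primitive if it is not $v^m$ with $v$ nonempty and $m\ge2$; $\mathcal{U}_n$ is the set of primitive words $w\in\Gamma^n$ with $w\notin\{1,2\}^n$. $C=\{(a,b,c)\in\mathbb{R}^3: a\ge b\ge c>0,\ a+b+c=1\}$, $C^*=\{(a,b,c)\in C: a\ne1/2\}$. Regions of $C^*$: $R_0=\{a<1/2\}$, $R_1=\{2a-1\ge2b,\ a>1/2\}$, $R_2=\{2b>2a-1\ge2c,\ a>1/2\}$, $R_3=\{2c>2a-1,\ a>1/2\}$. Sorted pedal map $P:C^*\to C$: $P(a,b,c)=(1-2c,1-2b,1-2a)$ on $R_0$, $(2a-1,2b,2c)$ on $R_1$, $(2b,2a-1,2c)$ on $R_2$, $(2b,2c,2a-1)$ on $R_3$. $\mathcal{T}_n=\{p\in C: P^j(p)\text{ defined for }0\le j<n,\ P^n(p)=p,\ P^d(p)\ne p\text{ for }1\le d<n\}$. The itinerary $\iota(p)=w_0\cdots w_{n-1}\in\Gamma^n$ of $p\in\mathcal{T}_n$ is defined by $P^j(p)\in R_{w_j}$ for $0\le j<n$. *)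

(* Defs.v *)
From Stdlib Require Import Reals Lra Lia List.
Import ListNotations.
Open Scope R_scope.

Definition pt := (R * R * R)%type.

Definition inC (p : pt) : Prop :=
  let '(a, b, c) := p in a >= b /\ b >= c /\ c > 0 /\ a + b + c = 1.

Definition inCstar (p : pt) : Prop :=
  inC p /\ (let '(a, _, _) := p in a <> 1/2).

(* Regions R_0, ..., R_3 of C^*, indexed by letters of Gamma = {0,1,2,3}. *)
Definition inRegion (k : nat) (p : pt) : Prop :=
  inCstar p /\
  let '(a, b, c) := p in
  match k with
  | 0%nat => a < 1/2
  | 1%nat => 2*a - 1 >= 2*b /\ a > 1/2
  | 2%nat => 2*b > 2*a - 1 /\ 2*a - 1 >= 2*c /\ a > 1/2
  | 3%nat => 2*c > 2*a - 1 /\ a > 1/2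
  | _ => False
  end.

(* Sorted pedal map.  It is made total for convenience; its values outside
   C^* are irrelevant since all statements require the iterates to lie in C^*. *)
Definition P (p : pt) : pt :=
  let '(a, b, c) := p in
  if Rlt_dec a (1/2) then (1 - 2*c, 1 - 2*b, 1 - 2*a)
  else if Rge_dec (2*a - 1) (2*b) then (2*a - 1, 2*b, 2*c)
  else if Rge_dec (2*a - 1) (2*c) then (2*b, 2*a - 1, 2*c)
  else (2*b, 2*c, 2*a - 1).

Definition Piter (j : nat) (p : pt) : pt := Nat.iter j P p.

(* T_n : points of exact period n whose first n iterates are defined. *)
Definition inT (n : nat) (p : pt) : Prop :=
  inC p /\
  (forall j : nat, (j < n)%nat -> inCstar (Piter j p)) /\
  Piter n p = p /\
  (forall d : nat, (1 <= d < n)%nat -> Piter d p <> p).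

Definition word_on_Gamma (w : list nat) : Prop := Forall (fun x => (x < 4)%nat) w.

Definition primitive (w : list nat) : Prop :=
  ~ exists (v : list nat) (m : nat),
      v <> [] /\ (2 <= m)%nat /\ w = concat (repeat v m).

Definition inU (n : nat) (w : list nat) : Prop :=
  word_on_Gamma w /\ length w = n /\ primitive w /\
  ~ Forall (fun x => x = 1%nat \/ x = 2%nat) w.

Definition is_itinerary (n : nat) (p : pt) (w : list nat) : Prop :=
  word_on_Gamma w /\ length w = n /\
  forall j : nat, (j < n)%nat -> inRegion (nth j w 0%nat) (Piter j p).

(* Main.v *)
Require Import Defs.
From Stdlib Require Import Reals Lra Lia List.
Import ListNotations.
Open Scope R_scope.

Definition dist (p q : pt) : R :=
  let '(a, b, c) := p in let '(a', b', c') := q in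
  Rabs (a - a') + Rabs (b - b') + Rabs (c - c').

Lemma abs1 (x y : R) : Rabs ((1 - 2*x) - (1 - 2*y)) = 2 * Rabs (x - y).
Proof. unfold Rabs; destruct (Rcase_abs _); destruct (Rcase_abs _); lra. Qed.
Lemma abs2 (x y : R) : Rabs ((2*x - 1) - (2*y - 1)) = 2 * Rabs (x - y).
Proof. unfold Rabs; destruct (Rcase_abs _); destruct (Rcase_abs _); lra. Qed.
Lemma abs3 (x y : R) : Rabs (2*x - 2*y) = 2 * Rabs (x - y).
Proof. unfold Rabs; destruct (Rcase_abs _); destruct (Rcase_abs _); lra. Qed.

Ltac split_ifs :=
  repeat match goal with
  | |- context [if Rlt_dec ?x ?y then _ else _] => destruct (Rlt_dec x y)
  | |- context [if Rge_dec ?x ?y then _ else _] => destruct (Rge_dec x y)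
  end.

Lemma dist_double k p q : inRegion k p -> inRegion k q -> dist (P p) (P q) = 2 * dist p q.
Proof.
  destruct p as [[a b] c], q as [[a' b'] c'].
  unfold inRegion, inCstar, inC; intros [[Hp Hp'] Hk] [[Hq Hq'] Hk'].
  unfold P; split_ifs; simpl; rewrite ?abs1, ?abs2, ?abs3;
  destruct k as [|[|[|[|]]]]; try lra; try tauto.
Qed.

Lemma dist_nonneg p q : 0 <= dist p q.
Proof.
  destruct p as [[a b] c], q as [[a' b'] c']; simpl.
  pose proof (Rabs_pos (a-a')); pose proof (Rabs_pos (b-b')); pose proof (Rabs_pos (c-c')); lra.
Qed.

Lemma dist_zero p q : dist p q = 0 -> p = q.
Proof.
  destruct p as [[a b] c], q as [[a' b'] c']; simpl; intro H.
  pose proof (Rabs_pos (a-a')); pose proof (Rabs_pos (b-b')); pose proof (Rabs_pos (c-c')).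
  assert (Ha : Rabs (a - a') = 0) by lra.
  assert (Hb : Rabs (b - b') = 0) by lra.
  assert (Hc : Rabs (c - c') = 0) by lra.
  revert Ha Hb Hc; unfold Rabs; destruct (Rcase_abs (a-a')), (Rcase_abs (b-b')), (Rcase_abs (c-c')); intros;
  (f_equal; [f_equal|]; lra).
Qed.

Lemma Piter_S j p : Piter (S j) p = P (Piter j p).
Proof. reflexivity. Qed.

Lemma Piter_add i j p : Piter (i + j) p = Piter i (Piter j p).
Proof. induction i; simpl; [reflexivity|]. unfold Piter in *; simpl. now rewrite IHi. Qed.

Definition same_regions (n : nat) (p q : pt) : Prop :=
  forall i, (i < n)%nat -> exists k, inRegion k (Piter i p) /\ inRegion k (Piter i q).

Lemma dist_iter n p q : same_regions n p q ->
  forall j, (j <= n)%nat -> dist (Piter j p) (Piter j q) = 2 ^ j * dist p q.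
Proof.
  intros H j; induction j; intro Hj.
  - simpl. lra.
  - rewrite !Piter_S. destruct (H j ltac:(lia)) as [k [H1 H2]].
    rewrite (dist_double k _ _ H1 H2), IHj by lia. simpl. lra.
Qed.

Lemma core n p q : (1 <= n)%nat -> Piter n p = p -> Piter n q = q ->
  same_regions n p q -> p = q.
Proof.
  intros Hn Hp Hq H. apply dist_zero.
  pose proof (dist_iter n p q H n (le_n _)) as E. rewrite Hp, Hq in E.
  pose proof (dist_nonneg p q).
  destruct n as [|m]; [lia|]. simpl in E.
  pose proof (pow_R1_Rle 2 m ltac:(lra)). nra.
Qed.

Definition region_of (p : pt) : nat :=
  let '(a, b, c) := p in
  if Rlt_dec a (1/2) then 0%nat
  else if Rge_dec (2*a - 1) (2*b) then 1%nat
  else if Rge_dec (2*a - 1) (2*c) then 2%nat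
  else 3%nat.

Lemma region_of_lt p : (region_of p < 4)%nat.
Proof. destruct p as [[a b] c]; unfold region_of; split_ifs; lia. Qed.

Lemma region_of_spec p : inCstar p -> inRegion (region_of p) p.
Proof.
  intro H. split; [exact H|]. destruct p as [[a b] c].
  unfold inCstar, inC in H. unfold region_of; split_ifs; simpl; lra.
Qed.

Lemma region_unique k k' p : inRegion k p -> inRegion k' p -> k = k'.
Proof.
  destruct p as [[a b] c]; unfold inRegion, inCstar, inC.
  intros [[H1 H1'] Hk] [_ Hk'].
  destruct k as [|[|[|[|]]]]; destruct k' as [|[|[|[|]]]]; try tauto; try reflexivity; lra.
Qed.

Definition thd (p : pt) : R := let '(_, _, c) := p in c.

Lemma thd_12 x : inRegion 1 x \/ inRegion 2 x -> thd (P x) = 2 * thd x.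
Proof.
  destruct x as [[a b] c]; unfold inRegion, inCstar, inC.
  intros [[_ H]|[_ H]]; unfold P; split_ifs; simpl; lra.
Qed.

Lemma len_concat_repeat (v : list nat) m : length (concat (repeat v m)) = (m * length v)%nat.
Proof. induction m; simpl; [reflexivity|]. rewrite length_app, IHm. lia. Qed.

Lemma concat_repeat_r (v : list nat) m : concat (repeat v (S m)) = concat (repeat v m) ++ v.
Proof. induction m; [simpl; now rewrite app_nil_r|].
  change (v ++ concat (repeat v (S m)) = (v ++ concat (repeat v m)) ++ v).
  rewrite IHm. now rewrite app_assoc. Qed.

Lemma itin_same n p q w : is_itinerary n p w -> is_itinerary n q w -> same_regions n p q.
Proof. intros [_ [_ Hp]] [_ [_ Hq]] i Hi. exists (nth i w 0%nat). auto. Qed.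

Lemma primitive_part n p w : (1 <= n)%nat -> inT n p -> is_itinerary n p w -> Defs.primitive w.
Proof.
  intros Hn [HC [Hstar [Hper Hmin]]] [Hw [Hlen Hreg]] [v [m [Hv [Hm Eq]]]].
  set (d := length v).
  assert (Hd : (1 <= d)%nat) by (destruct v; [congruence| simpl; unfold d; simpl; lia]).
  assert (Hnd : n = (m * d)%nat) by (rewrite <- Hlen, Eq; apply len_concat_repeat).
  destruct m as [|m']; [lia|].
  set (u := concat (repeat v m')).
  assert (E1 : w = v ++ u) by (rewrite Eq; reflexivity).
  assert (E2 : w = u ++ v) by (rewrite Eq; apply concat_repeat_r).
  assert (Hu : length u = (n - d)%nat) by (unfold u; rewrite len_concat_repeat; fold d; lia).
  apply (Hmin d); [lia|].
  symmetry. apply (core n p (Piter d p)); auto.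
  - rewrite <- Piter_add, Nat.add_comm, Piter_add, Hper. reflexivity.
  - intros i Hi. rewrite <- Piter_add.
    destruct (Nat.lt_ge_cases (i + d) n) as [H1|H1].
    + exists (nth i w 0%nat). split; [apply Hreg; lia|].
      replace (nth i w 0%nat) with (nth (i + d) w 0%nat); [apply Hreg; lia|].
      rewrite E1 at 1. rewrite app_nth2 by (fold d; lia).
      rewrite E2, app_nth1 by lia. f_equal. fold d. lia.
    + replace (i + d)%nat with ((i + d - n) + n)%nat by lia.
      rewrite Piter_add, Hper.
      exists (nth i w 0%nat). split; [apply Hreg; lia|].
      replace (nth i w 0%nat) with (nth (i + d - n) w 0%nat); [apply Hreg; lia|].
      rewrite E1 at 1. rewrite app_nth1 by (fold d; lia).
      rewrite E2, app_nth2 by lia. f_equal. lia.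
Qed.

Lemma not12_part n p w : (1 <= n)%nat -> inT n p -> is_itinerary n p w ->
  ~ Forall (fun x => x = 1%nat \/ x = 2%nat) w.
Proof.
  intros Hn [HC [Hstar [Hper Hmin]]] [Hw [Hlen Hreg]] HF.
  rewrite Forall_nth in HF.
  assert (K : forall j, (j <= n)%nat -> thd (Piter j p) = 2 ^ j * thd p).
  { induction j; intro Hj; [simpl; lra|].
    rewrite Piter_S, thd_12.
    - rewrite IHj by lia. simpl; lra.
    - pose proof (Hreg j ltac:(lia)) as R1.
      destruct (HF j 0%nat ltac:(lia)) as [E|E]; rewrite E in R1; auto. }
  pose proof (K n (le_n _)) as E. rewrite Hper in E.
  destruct p as [[a b] c]; simpl in E; unfold inC in HC.
  destruct n as [|m]; [lia|]. simpl in E.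
  pose proof (pow_R1_Rle 2 m ltac:(lra)). nra.
Qed.

Theorem mainTheorem8 :
  forall n : nat, (1 <= n)%nat ->
    (forall p : pt, inT n p ->
       (exists! w : list nat, is_itinerary n p w) /\
       (forall w : list nat, is_itinerary n p w -> inU n w)) /\
    (forall (p q : pt) (w : list nat),
       inT n p -> inT n q -> is_itinerary n p w -> is_itinerary n q w -> p = q).
Proof.
  intros n Hn. split.
  - intros p Hp. split.
    + exists (map (fun j => region_of (Piter j p)) (seq 0 n)).
      assert (Hnth : forall j, (j < n)%nat ->
        nth j (map (fun j => region_of (Piter j p)) (seq 0 n)) 0%nat = region_of (Piter j p)).
      { intros j Hj.
        rewrite nth_indep with (d' := region_of (Piter 0 p)) by (rewrite length_map, length_seq; lia).
        rewrite (map_nth (fun j => region_of (Piter j p))), seq_nth by lia. reflexivity. }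
      split.
      * split; [|split].
        -- apply Forall_map, Forall_forall. intros; apply region_of_lt.
        -- now rewrite length_map, length_seq.
        -- intros j Hj. rewrite Hnth by lia. apply region_of_spec. apply Hp; lia.
      * intros w' [_ [Hl' Hr']]. apply (nth_ext _ _ 0%nat 0%nat).
        -- now rewrite length_map, length_seq.
        -- intros j Hj. rewrite length_map, length_seq in Hj. rewrite Hnth by lia.
           apply (region_unique _ _ (Piter j p)); [apply region_of_spec; apply Hp; lia|].
           apply Hr'; lia.
    + intros w Hw. pose proof Hw as [Hg [Hl _]].
      split; [exact Hg|]. split; [exact Hl|]. split.
      * exact (primitive_part n p w Hn Hp Hw).
      * exact (not12_part n p w Hn Hp Hw).
  - intros p q w Hp Hq Hwp Hwq.
    apply (core n p q Hn); [apply Hp|apply Hq|]. exact (itin_same n p q w Hwp Hwq).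
Qed.
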